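(* Suppose $(X_i,Y_i)_{i\in[n+m]}$ is an i.i.d. sample from $P_{XY}$. Then for all measurable $D:\mathcal X\to\{0,1\}$ and all $C:\mathcal X\to\mathcal I$, $$FCR(D,C)=mFCR(D,C)\,\mathbb P\Big(\sum_{i\in[m]}D(X_{n+i})>0\Big).$$
   Context: $\mathcal I$ is a collection of subsets of $\mathcal Y$. $FCR(D,C)=\mathbb E\left[\frac{\sum_{i\in[m]}\mathbb 1\{Y_{n+i}\notin C(X_{n+i})\}D(X_{n+i})}{1\vee\sum_{i\in[m]}D(X_{n+i})}\right]$ and, for $(X,Y)\sim P_{XY}$, $mFCR(D,C)=\frac{\mathbb E[\mathbb 1\{Y\notin C(X)\}D(X)]}{\mathbb E[D(X)]}$, with the convention that the ratio is $0$ if the denominator is $0$. *)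

(* Defs.v *)
From HB Require Import structures.
From mathcomp Require Import all_boot all_order all_algebra.
From mathcomp Require Import all_classical all_reals all_analysis.
Set Implicit Arguments. Unset Strict Implicit. Unset Printing Implicit Defensive.
Import Order.TTheory GRing.Theory Num.Theory.
Local Open Scope classical_set_scope.
Local Open Scope ring_scope.

Definition miscov (X Y : Type) (C : X -> set Y) : set (X * Y) :=
  [set z | ~ C z.1 z.2].

Definition iid_sample (d dXY : measure_display) (Omega : measurableType d)
  (XY : measurableType dXY) (R : realType) (P : probability Omega R)
  (PXY : probability XY R) (N : nat) (Z : 'I_N -> Omega -> XY) : Prop :=
  (forall i, measurable_fun setT (Z i)) /\
  forall A : 'I_N -> set XY, (forall i, measurable (A i)) ->
    P (\bigcap_(i in [set: 'I_N]) (Z i @^-1` A i)) =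
    ((\prod_(i < N) fine (PXY (A i)))%:E)%E.

Definition fcp (R : realType) (X Y Omega : Type) (n m : nat)
  (Z : 'I_(n + m) -> Omega -> X * Y) (D : X -> bool) (C : X -> set Y)
  (w : Omega) : R :=
  (\sum_(i < m) \1_(miscov C) (Z (rshift n i) w) * (D (Z (rshift n i) w).1)%:R)
  / Num.max 1 (\sum_(i < m) ((D (Z (rshift n i) w).1)%:R : R)).

Definition FCR (d : measure_display) (Omega : measurableType d) (R : realType)
  (P : probability Omega R) (X Y : Type) (n m : nat)
  (Z : 'I_(n + m) -> Omega -> X * Y) (D : X -> bool) (C : X -> set Y)
  : \bar R :=
  (\int[P]_w (@fcp R X Y Omega n m Z D C w)%:E)%E.

Definition mFCR (d1 d2 : measure_display) (X : measurableType d1)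
  (Y : measurableType d2) (R : realType) (PXY : probability (X * Y)%type R)
  (D : X -> bool) (C : X -> set Y) : R :=
  let num := fine (\int[PXY]_z (\1_(miscov C) z * (D z.1)%:R)%:E)%E in
  let den := fine (\int[PXY]_z ((D z.1)%:R : R)%:E)%E in
  if den == 0 then 0 else num / den.

(* Main.v *)
Require Import Defs.
From HB Require Import structures.
From mathcomp Require Import all_boot all_order all_algebra.
From mathcomp Require Import all_classical all_reals all_analysis.
From mathcomp Require Import measurable_realfun.
Import Order.TTheory GRing.Theory Num.Theory.
Local Open Scope classical_set_scope.
Local Open Scope ring_scope.


Lemma int_fin d (T : measurableType d) (R : realType) (mu : probability T R)
  (K : finType) (f : T -> K) (g : K -> R) :
  (forall k, measurable (f @^-1` [set k])) -> (forall k, 0 <= g k) ->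
  (\int[mu]_x (g (f x))%:E = (\sum_k g k * fine (mu (f @^-1` [set k])))%:E)%E.
Proof.
move=> mf g0.
have -> : (fun x => (g (f x))%:E) =
    (fun x => \sum_(k : K) ((g k)%:E * (\1_(f @^-1` [set k]) x)%:E))%E.
  apply: funext => x; rewrite (bigD1 (f x)) //= big1 ?adde0.
  - by rewrite indicE mem_set // mule1.
  - move=> k kfx; rewrite indicE memNset ?mule0 //= => h.
    by rewrite h eqxx in kfx.
rewrite ge0_integral_sum //; first last.
  - by move=> k x _; rewrite -EFinM lee_fin mulr_ge0 // indicE ler0n.
  - move=> k; apply: emeasurable_funM; first exact: measurable_cst.
    by apply/measurable_EFinP; exact: measurable_indic.
rewrite -sumEFin; apply: eq_bigr => k _.
rewrite ge0_integralZl_EFin //; last first.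
  by apply/measurable_EFinP; exact: measurable_indic.
rewrite integral_indic // setIT EFinM fineK //.
exact: fin_num_measure.
Qed.


Section Comb.
Variables (R : realType) (m : nat) (q : bool * bool -> R).
Hypothesis q0 : forall t, 0 <= q t.
Definition Wt (c : {ffun 'I_m -> bool * bool}) := \prod_i q (c i).
Definition Kt (c : {ffun 'I_m -> bool * bool}) : R := \sum_i ((c i).2)%:R.
Definition Mt (c : {ffun 'I_m -> bool * bool}) := Num.max 1 (Kt c).
Definition Pt i (c : {ffun 'I_m -> bool * bool}) := \prod_(j | j != i) q (c j).
Definition Xt (i : 'I_m) := \sum_(c : {ffun 'I_m -> bool * bool}) ((c i == (true, true))%:R * Pt i c / Mt c).
Definition tog i (c : {ffun 'I_m -> bool * bool}) : {ffun 'I_m -> bool * bool} :=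
  [ffun j => if j == i then (~~ (c j).1, (c j).2) else c j].

Lemma togK i : involutive (tog i).
Proof.
move=> c; apply/ffunP => j; rewrite !ffunE.
by case: eqP => // _; case: (c j) => [a b] /=; rewrite negbK.
Qed.

Lemma Kt_tog i c : Kt (tog i c) = Kt c.
Proof. by apply: eq_bigr => j _; rewrite ffunE; case: eqP. Qed.

Lemma Pt_tog i c : Pt i (tog i c) = Pt i c.
Proof. by apply: eq_bigr => j ji; rewrite ffunE (negbTE ji). Qed.

Lemma Wt_split i c : Wt c = q (c i) * Pt i c.
Proof. by rewrite /Wt (bigD1 i). Qed.

Lemma U_eq i : \sum_(c : {ffun 'I_m -> bool * bool}) ((c i == (true, true))%:R * Wt c / Mt c) = q (true, true) * Xt i.
Proof.
rewrite /Xt mulr_sumr; apply: eq_bigr => c _.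
rewrite (Wt_split i); case: eqP => [->|_]; first by rewrite !mul1r mulrA.
by rewrite !mul0r mulr0.
Qed.

Lemma V_eq i : \sum_(c : {ffun 'I_m -> bool * bool}) ((c i == (false, true))%:R * Wt c / Mt c) = q (false, true) * Xt i.
Proof.
rewrite (reindex_inj (can_inj (togK i))) /Xt mulr_sumr; apply: eq_bigr => c _.
rewrite /Mt Kt_tog (Wt_split i) Pt_tog ffunE eqxx.
case: (c i) => [a b] /=; case: a; case: b => /=; rewrite ?mul1r ?mul0r ?mulr0 ?mulrA //.
Qed.

Lemma KM c : Kt c / Mt c = (0 < Kt c)%R%:R.
Proof.
rewrite /Mt /Kt -natr_sum; set k := (\sum_i _)%N.
case: k => [|k]; first by rewrite mul0r ltxx.
rewrite ltr0Sn max_r ?ler1n // divff //.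
Qed.

Lemma comb :
  \sum_(c : {ffun 'I_m -> bool * bool}) ((\sum_i ((c i).1)%:R * ((c i).2)%:R) / Mt c * Wt c) =
  (if q (true, true) + q (false, true) == 0 then 0
   else q (true, true) / (q (true, true) + q (false, true))) *
  \sum_(c : {ffun 'I_m -> bool * bool}) ((0 < Kt c)%R%:R * Wt c).
Proof.
have L : \sum_(c : {ffun 'I_m -> bool * bool}) ((\sum_i ((c i).1)%:R * ((c i).2)%:R) / Mt c * Wt c)
    = q (true, true) * \sum_i Xt i.
  rewrite mulr_sumr; under [RHS]eq_bigr do rewrite -U_eq.
  rewrite exchange_big /=.
  apply: eq_bigr => c _; rewrite mulrAC !mulr_suml; apply: eq_bigr => i _.
  congr (_ * _ / _); case: (c i) => [[] []] //=;
  by rewrite ?mulr1 ?mulr0 ?mul0r.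
have T : \sum_(c : {ffun 'I_m -> bool * bool}) ((0 < Kt c)%R%:R * Wt c)
    = (q (true, true) + q (false, true)) * \sum_i Xt i.
  rewrite mulrDl !mulr_sumr -big_split /=.
  under [RHS]eq_bigr do rewrite -U_eq -V_eq -big_split /=.
  rewrite exchange_big /=.
  apply: eq_bigr => c _; rewrite -KM mulrAC /Kt !mulr_suml.
  apply: eq_bigr => i _; rewrite -!mulrDl; congr (_ * _ * _).
  by case: (c i) => [[] []] /=; rewrite ?addr0 ?add0r.
rewrite L T; case: eqP => [h|h].
  have q11 : q (true, true) = 0.
    by move: (paddr_eq0 (q0 (true,true)) (q0 (false,true))); rewrite h eqxx => /esym/andP[/eqP].

  by rewrite q11 !mul0r.
by rewrite mulrA divfK //; apply/eqP.
Qed.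
End Comb.
Arguments Wt {R m}. Arguments Kt {R m}. Arguments Mt {R m}.

Lemma sum_bb (R : realType) (F : bool * bool -> R) :
  \sum_t F t = F (true, true) + F (true, false) + (F (false, true) + F (false, false)).
Proof.
transitivity (\sum_(p : bool * bool) F (p.1, p.2)); first by apply: eq_bigr => [[]].
by rewrite -(pair_bigA _ (fun a b => F (a, b))) /= !big_bool /=.
Qed.

Theorem proposition1 (R : realType) (d d1 d2 : measure_display)
  (Omega : measurableType d) (P : probability Omega R)
  (X : measurableType d1) (Y : measurableType d2)
  (PXY : probability (X * Y)%type R) (n m : nat)
  (Z : 'I_(n + m) -> Omega -> (X * Y)%type)
  (I : set (set Y)) :
  iid_sample P PXY Z ->
  forall (D : X -> bool) (C : X -> set Y),
    measurable_fun setT D ->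
    (forall x, I (C x)) ->
    measurable (miscov C) ->
    FCR P Z D C =
    ((mFCR PXY D C)%:E *
       P [set w | (0 < \sum_(i < m) ((D (Z (rshift n i) w).1)%:R : R))%R])%E.
Proof.
move=> [mZ iid] D C mD _ mC.
pose typ1 (z : X * Y) := (z \in miscov C, D z.1).
have mA b : measurable [set z : X * Y | (z \in miscov C) = b].
  case: b.
    have -> : [set z : X * Y | (z \in miscov C) = true] = miscov C.
      by apply/seteqP; split=> z /= h; [exact: set_mem | exact: mem_set].
    exact: mC.
  have -> : [set z : X * Y | (z \in miscov C) = false] = ~` miscov C.
    apply/seteqP; split=> z /=; last by move=> h; apply: memNset.
    by move=> h Az; rewrite mem_set in h.
  exact: measurableC.
have mB b : measurable [set z : X * Y | D z.1 = b].
  have := @measurable_fst _ _ X Y measurableT _ (mD measurableT [set b] ltac:(by [])).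
  rewrite !setTI. exact.
have mt1 t : measurable (typ1 @^-1` [set t]).
  rewrite (_ : _ @^-1` _ = [set z | (z \in miscov C) = t.1] `&` [set z | D z.1 = t.2]).
    exact: measurableI.
  apply/seteqP; split=> z /=; first by move=> <-.
  by case: t => a b /= [<- <-].
pose typv w : {ffun 'I_m -> bool * bool} := [ffun i => typ1 (Z (rshift n i) w)].
pose Avec (c : {ffun 'I_m -> bool * bool}) (j : 'I_(n + m)) :=
  match fintype.split j with inl _ => setT | inr i => typ1 @^-1` [set c i] end.
have mAvec c j : measurable (Avec c j).
  by rewrite /Avec; case: (fintype.split j).
have eqv c : typv @^-1` [set c] = \bigcap_(j in [set: 'I_(n + m)]) (Z j @^-1` Avec c j).
  apply/seteqP; split=> w /=.
    move=> <- j _; rewrite /Avec; case E: (fintype.split j) => [k|i] //=.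
    by rewrite ffunE; have := splitK j; rewrite E /= => <-.
  move=> h; apply/ffunP => i; rewrite ffunE.
  have := h (rshift n i) Logic.I; rewrite /Avec.
  by rewrite (unsplitK (inr i)).
have mv c : measurable (typv @^-1` [set c]).
  rewrite eqv; apply: fin_bigcap_measurable; first exact: finite_finset.
  by move=> j _; have := mZ j measurableT _ (mAvec c j); rewrite setTI.
pose q t := fine (PXY (typ1 @^-1` [set t])).
have q0 t : 0 <= q t by apply: fine_ge0; exact: measure_ge0.
have Pv c : fine (P (typv @^-1` [set c])) = Wt q c.
  rewrite eqv iid // big_split_ord /= big1 ?mul1r.
    by apply: eq_bigr => i _; rewrite /Avec (unsplitK (inr i)).
  by move=> i _; rewrite /Avec (unsplitK (inl i)) probability_setT.
have -> : FCR P Z D C = (\sum_(c : {ffun 'I_m -> bool * bool}) ((\sum_i ((c i).1)%:R * ((c i).2)%:R) / Mt c * Wt q c))%:E.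
  rewrite /FCR.
  rewrite (_ : (fun w => (@fcp R _ _ _ n m Z D C w)%:E) =
     (fun w => ((fun c : {ffun 'I_m -> bool * bool} =>
        (\sum_i ((c i).1)%:R * ((c i).2)%:R) / Mt c) (typv w))%:E)); last first.
    apply: funext => w; rewrite /fcp /Mt /Kt; congr (_%:E); congr (_ / _).
      by apply: eq_bigr => i _; rewrite ffunE indicE.
    by congr (Num.max 1 _); apply: eq_bigr => i _; rewrite ffunE.
  rewrite (int_fin _ _ _ P _ typv (fun c : {ffun 'I_m -> bool * bool} => (\sum_i ((c i).1)%:R * ((c i).2)%:R) / Mt c) mv).
    by congr (_%:E); apply: eq_bigr => c _; rewrite Pv.
  move=> c; apply: divr_ge0; first by apply: sumr_ge0 => i _; rewrite -natrM ler0n.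
  by rewrite /Mt le_max ler01.
pose Sset := [set w | (0 < \sum_(i < m) ((D (Z (rshift n i) w).1)%:R : R))%R].
have eqS : Sset = \bigcup_(c in [set c : {ffun 'I_m -> bool * bool} | (0 < Kt (R:=R) c)%R]) typv @^-1` [set c].
  apply/seteqP; split=> w /=.
    move=> h; exists (typv w) => //=; rewrite /Kt.
    by under eq_bigr do rewrite ffunE.
  case=> c /= h e; rewrite -e in h; move: h; rewrite /Kt.
  by under eq_bigr do rewrite ffunE.
have mS : measurable Sset.
  rewrite eqS; apply: fin_bigcup_measurable => //; exact: finite_finset.
have -> : P Sset = (\sum_(c : {ffun 'I_m -> bool * bool}) ((0 < Kt (R:=R) c)%R%:R * Wt q c))%:E.
  have := integral_indic P measurableT mS; rewrite setIT => <-.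
  pose G := fun c : {ffun 'I_m -> bool * bool} => ((0 < Kt (R:=R) c)%R%:R : R).
  transitivity (\int[P]_w (G (typv w))%:E)%E.
    apply: eq_integral => w _; rewrite indicE /G.
    have -> : Kt (typv w) = \sum_(i < m) ((D (Z (rshift n i) w).1)%:R : R).
      by rewrite /Kt; under eq_bigr do rewrite ffunE.
    case: (boolP (0 < _)) => h; first by rewrite mem_set.
    by rewrite memNset //; apply/negP.
  rewrite (int_fin _ _ _ P _ typv G mv); last by move=> c; rewrite /G ler0n.
  by congr (_%:E); apply: eq_bigr => c _; rewrite Pv.
have -> : mFCR PXY D C = (if q (true, true) + q (false, true) == 0 then 0
   else q (true, true) / (q (true, true) + q (false, true))).
  rewrite /mFCR.
  have e1 : (\int[PXY]_z (\1_(miscov C) z * (D z.1)%:R)%:E)%E =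
      (\sum_(t : bool * bool) ((t.1)%:R * (t.2)%:R : R) * q t)%:E.
    rewrite -(int_fin _ _ _ PXY _ typ1 (fun t : bool * bool => ((t.1)%:R * (t.2)%:R : R)) mt1); last first.
      by move=> t; rewrite -natrM ler0n.
    by apply: eq_integral => z _; rewrite indicE.
  have e2 : (\int[PXY]_z ((D z.1)%:R : R)%:E)%E =
      (\sum_(t : bool * bool) ((t.2)%:R : R) * q t)%:E.
    rewrite -(int_fin _ _ _ PXY _ typ1 (fun t : bool * bool => ((t.2)%:R : R)) mt1) //.
  rewrite e1 e2 /= !sum_bb /=.
  by rewrite !mul0r !mul1r !addr0 ?add0r ?mulr0n ?mul0r ?addr0.
by rewrite -EFinM comb.
Qed.
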